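(* Let $U_3=(\mathbb{N},F_3)$ where $F_3=\{l_i:i\in\mathbb{N}\setminus\{0\}\}$ and, for $i\ge 1$, $j\in\mathbb{N}$, $l_i(j)=0$ if $j\le i$ and $l_i(j)=1$ if $j>i$. Then $\operatorname{typ}_u(Tab(U_3),h)=t_3$, where $h$ is the depth and $t_3$ is the table with rows (indexed $i,d,a$; entries in columns $i,d,a$) $(\gamma,\epsilon,\epsilon)$, $(\beta,\gamma,\epsilon)$, $(\alpha,\alpha,\alpha)$.
   Context: Let $\mathbb{N}=\{0,1,2,\dots\}$; for $k\ge 2$, $E_k=\{0,\dots,k-1\}$; $\mathcal{P}(\mathbb{N})$ is the set of nonempty finite subsets of $\mathbb{N}$. For a nonempty set $F$, a decision table $T\in\mathcal{M}_k(F)$ is a rectangular table with $n\ge1$ columns labeled with attributes $f_1,\dots,f_n\in F$ (columns with the same label are equal), whose rows are pairwise different tuples in $E_k^n$ (possibly none), each row labeled with a set from $\mathcal{P}(\mathbb{N})$; $At(T)=\{f_1,\dots,f_n\}$, $\Delta(T)$ the set of rows; for a word $\alpha=(f_{i_1},\delta_1)\cdots(f_{i_m},\delta_m)$, $T\alpha$ is the subtable of rows with value $\delta_j$ in column $f_{i_j}$ for all $j$. Information system: $U=(A,F)$ with $A$ nonempty and $F$ a nonempty set of functions $A\to E_k$ (here $k=2$). A problem over $U$ is $z=(\nu,f_1,\dots,f_n)$ with $n\ge1$, $\nu:E_k^n\to\mathcal{P}(\mathbb{N})$, $f_1,\dots,f_n\in F$. Its table $T(z)\in\mathcal{M}_k(F)$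 has columns labeled $f_1,\dots,f_n$; $\bar\delta\in E_k^n$ is a row iff there is $x\in A$ with $f_j(x)=\delta_j$ for all $j$, and it is labeled $\nu(\bar\delta)$. $Tab(U)=\{T(z): z \text{ a problem over } U\}$ (a closed class, i.e. closed under removal of columns (keeping the first of equal rows), arbitrary changing of decision sets, permutation and duplication of columns). Decision trees over $\mathcal{M}_k(F)$: finite rooted directed trees with at least two nodes; root and edges leaving the root unlabeled; worker nodes (neither root nor terminal) labeled by attributes in $F$; edges leaving worker nodes labeled by elements of $E_k$; terminal nodes labeled by numbers in $\mathbb{N}$. For a complete path $\xi$, $\pi(\xi)$ is the word of pairs (attribute of worker node, label of leaving edge) along $\xi$, $\varphi(\xi)$ the word of those attributes, $\tau(\xi)$ the terminal label. A nondeterministic decision tree for $T$ uses only attributes in $At(T)$, satisfies $\bigcup_\xi\Delta(T\pi(\xi))=\Delta(T)$, and for every row $r\in\Delta(T\pi(\xi))$, $\tau(\xi)$ lies in the decision set of $r$. It is deterministic if exactly one edge leaves the root and edges leaving each worker node have distinct labels. The depth of a word is its length $h(\alpha)=|\alpha|$; $h(\Gamma)=\max_\xi h(\varphi(\xi))$. For $T$ with columns $f_1,\dots,f_n$: $h^i(T)=n$, $h^d(T)$ and $h^a(T)$ are the minimum depths of deterministic, respectively nondeterministic, decision trees for $T$. For $b,c\in\{i,d,a\}$ and a class $\mathcal{C}$, $\mathcal{U}^{bc}_{\mathcal{C}h}(n)=\max\{h^b(T):T\in\mathcal{C},h^c(T)\le n\}$ (defined iff this set is nonempty and finite). For a partial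 $g:\mathbb{N}\to\mathbb{N}$, $\mathrm{Dom}^+(g)=\{n\in\mathrm{Dom}(g):g(n)\ge n\}$, $\mathrm{Dom}^-(g)=\{n\in\mathrm{Dom}(g):g(n)\le n\}$; $\operatorname{typ}(g)$ is $\alpha$ if $\mathrm{Dom}(g)$ is infinite and $g$ bounded above; $\beta$ if $\mathrm{Dom}(g)$ infinite, $\mathrm{Dom}^+(g)$ finite, $g$ unbounded; $\gamma$ if $\mathrm{Dom}^+(g)$ and $\mathrm{Dom}^-(g)$ are infinite; $\delta$ if $\mathrm{Dom}(g)$ infinite and $\mathrm{Dom}^-(g)$ finite; $\epsilon$ if $\mathrm{Dom}(g)$ finite. $\operatorname{typ}_u(\mathcal{C},h)$ is the $3\times3$ table (rows and columns indexed $i,d,a$) with entry $\operatorname{typ}(\mathcal{U}^{bc}_{\mathcal{C}h})$ in row $b$, column $c$. *)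

(* Defs.v *)
(* decision tables and decision trees over an
   information system with k = 2 (E_2 = bool, false = 0, true = 1). *)
From Stdlib Require List.
From mathcomp Require Import all_boot.
Set Implicit Arguments.
Unset Strict Implicit.
Unset Printing Implicit Defensive.

(* General information system U = (X, F): attributes are the elements *)
(* of a type [Att], evaluated by [ev : Att -> X -> bool].               *)
Section DecisionTrees.
Variables (X Att : Type) (ev : Att -> X -> bool).

(* A non-root node of a decision tree: a terminal node labelled by a
   number, or a worker node labelled by an attribute with a list of
   outgoing edges (edge label, subtree). *)
Inductive dnode : Type :=
  | Leaf of nat
  | Node of Att & seq (bool * dnode).

(* A decision tree is given by its root, i.e. the list of the subtrees
   hanging from the (unlabelled) edges leaving the root. *)
Definition dtree := seq dnode.

(* complete paths from a node: (pi(xi), tau(xi)) *)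
Fixpoint npaths (t : dnode) : seq (seq (Att * bool) * nat) :=
  match t with
  | Leaf d => [:: ([::], d)]
  | Node f ch =>
      (fix aux (ch : seq (bool * dnode)) :=
         match ch with
         | [::] => [::]
         | (b, c) :: ch' =>
             map (fun p => ((f, b) :: p.1, p.2)) (npaths c) ++ aux ch'
         end) ch
  end.

Definition paths (G : dtree) := flatten (map npaths G).

Definition depth (G : dtree) : nat :=
  foldr maxn 0 (map (fun p => size p.1) (paths G)).

(* well-formedness of the nodes: worker nodes have at least one outgoing
   edge (otherwise they would be terminal), their attributes satisfy P,
   and, if [detm], the edges leaving each worker node have distinct labels *)
Fixpoint node_ok (P : Att -> Prop) (detm : bool) (t : dnode) : Prop :=
  match t with
  | Leaf _ => True
  | Node f ch =>
      P f /\ ch <> [::] /\ (detm -> uniq (map fst ch)) /\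
      (fix aux (ch : seq (bool * dnode)) : Prop :=
         match ch with
         | [::] => True
         | (_, c) :: ch' => node_ok P detm c /\ aux ch'
         end) ch
  end.

(* The table T(z) of the problem z = (nu, fs): its rows are the tuples
   (f_1 x, ..., f_n x), x in X, the row delta being labelled nu delta. *)
Definition rowof (fs : seq Att) (x : X) : seq bool := map (fun f => ev f x) fs.
Definition is_row (fs : seq Att) (delta : seq bool) := exists x, delta = rowof fs x.
Definition sat (x : X) (alpha : seq (Att * bool)) :=
  forall p, List.In p alpha -> ev p.1 x = p.2.
(* delta is a row of the subtable T(z) alpha (attributes of alpha lie in At(T)) *)
Definition in_sub (fs : seq Att) (alpha : seq (Att * bool)) (delta : seq bool) :=
  exists x, delta = rowof fs x /\ sat x alpha.

Definition is_tree_for (detm : bool) (fs : seq Att) (nu : seq bool -> seq nat)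
    (G : dtree) : Prop :=
  G <> [::] /\ (detm -> size G = 1) /\
  (forall t, List.In t G -> node_ok (fun f => List.In f fs) detm t) /\
  (forall delta, is_row fs delta ->
     exists xi, List.In xi (paths G) /\ in_sub fs xi.1 delta) /\
  (forall xi delta, List.In xi (paths G) -> in_sub fs xi.1 delta ->
     xi.2 \in nu delta).

Definition h_min (detm : bool) fs nu (m : nat) : Prop :=
  (exists G, is_tree_for detm fs nu G /\ depth G = m) /\
  (forall G, is_tree_for detm fs nu G -> m <= depth G).

(* z = (nu, f_1, ..., f_n) is a problem over U: n >= 1 and nu maps
   E_2^n to nonempty finite sets of naturals (given as lists) *)
Definition problem (fs : seq Att) (nu : seq bool -> seq nat) : Prop :=
  fs <> [::] /\ forall delta, size delta = size fs -> nu delta <> [::].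

Inductive hkind := HI | HD | HA.

(* hval b fs nu m  <->  h^b(T(z)) = m *)
Definition hval (b : hkind) fs nu (m : nat) : Prop :=
  match b with
  | HI => m = size fs
  | HD => h_min true fs nu m
  | HA => h_min false fs nu m
  end.

(* S b c n = { h^b(T) : T in Tab(U), h^c(T) <= n } *)
Definition Sset (b c : hkind) (n w : nat) : Prop :=
  exists fs nu, problem fs nu /\ hval b fs nu w /\
    exists m, hval c fs nu m /\ m <= n.

(* graph of the partial function U^{bc}_{Tab(U) h}:
   defined at n iff S is nonempty and finite, with value its maximum *)
Definition Ufun (b c : hkind) (n v : nat) : Prop :=
  (exists w, Sset b c n w) /\
  (exists B, forall w, Sset b c n w -> w < B) /\
  Sset b c n v /\ (forall w, Sset b c n w -> w <= v).

End DecisionTrees.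

(* Types of partial functions nat -> nat (given by their graphs)        *)
Definition pfun := nat -> nat -> Prop.
Definition nat_infinite (P : nat -> Prop) := forall m, exists n, m <= n /\ P n.
Definition nat_finite (P : nat -> Prop) := exists m, forall n, P n -> n < m.
Definition Dom (g : pfun) (n : nat) := exists v, g n v.
Definition Dom_plus (g : pfun) (n : nat) := exists v, g n v /\ n <= v.
Definition Dom_minus (g : pfun) (n : nat) := exists v, g n v /\ v <= n.
Definition bounded_above (g : pfun) := exists B, forall n v, g n v -> v <= B.

Inductive typ := Talpha | Tbeta | Tgamma | Tdelta | Teps.

Definition has_typ (g : pfun) (t : typ) : Prop :=
  match t with
  | Talpha => nat_infinite (Dom g) /\ bounded_above g
  | Tbeta => nat_infinite (Dom g) /\ nat_finite (Dom_plus g) /\ ~ bounded_above g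
  | Tgamma => nat_infinite (Dom_plus g) /\ nat_infinite (Dom_minus g)
  | Tdelta => nat_infinite (Dom g) /\ nat_finite (Dom_minus g)
  | Teps => nat_finite (Dom g)
  end.

Definition l (i j : nat) : bool := i < j.
Definition F3 := {f : nat -> bool | exists i, 0 < i /\ f = l i}.
Definition ev3 (f : F3) (x : nat) : bool := proj1_sig f x.

(* the table t_3 : row b, column c *)
Definition t3 (b c : hkind) : typ :=
  match b, c with
  | HI, HI => Tgamma | HI, HD => Teps | HI, HA => Teps
  | HD, HI => Tbeta  | HD, HD => Tgamma | HD, HA => Teps
  | HA, _ => Talpha
  end.

(* Main.v *)
Require Import Defs.
From mathcomp Require Import all_boot.
From mathcomp Require Import zify.
From Stdlib Require Import Classical ClassicalEpsilon.
Set Implicit Arguments.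
Unset Strict Implicit.
Unset Printing Implicit Defensive.

Section Typ.
Variable g : pfun.

Lemma inf_fin_false (P : nat -> Prop) : nat_infinite P -> nat_finite P -> False.
Proof. move=> Hi [m Hm]; have [n [Hn Pn]] := Hi m; have := Hm _ Pn; lia. Qed.

Lemma plus_dom : forall n, Dom_plus g n -> Dom g n.
Proof. by move=> n [v [H _]]; exists v. Qed.
Lemma minus_dom : forall n, Dom_minus g n -> Dom g n.
Proof. by move=> n [v [H _]]; exists v. Qed.

Lemma inf_sub (P Q : nat -> Prop) : (forall n, P n -> Q n) -> nat_infinite P -> nat_infinite Q.
Proof. move=> H Hi m; have [n [Hn Pn]] := Hi m; exists n; split=> //; exact: H. Qed.

Lemma infplus_unb : nat_infinite (Dom_plus g) -> ~ bounded_above g.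
Proof.
move=> Hi [B HB]; have [n [Hn [v [Hv Hnv]]]] := Hi B.+1; have := HB _ _ Hv; lia.
Qed.

Lemma bdd_finplus : bounded_above g -> nat_finite (Dom_plus g).
Proof. move=> [B HB]; exists B.+1 => n [v [Hv Hnv]]; have := HB _ _ Hv; lia. Qed.

Lemma inf_finplus_infminus :
  nat_infinite (Dom g) -> nat_finite (Dom_plus g) -> nat_infinite (Dom_minus g).
Proof.
move=> Hi [B HB] m; have [n [Hn [v Hv]]] := Hi (maxn m B).
exists n; split; first lia.
exists v; split=> //.
case: (leqP v n) => Hnv; first by [].
have := HB n (ex_intro _ v (conj Hv (ltnW Hnv))); lia.
Qed.

Lemma inf_finminus_infplus :
  nat_infinite (Dom g) -> nat_finite (Dom_minus g) -> nat_infinite (Dom_plus g).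
Proof.
move=> Hi [B HB] m; have [n [Hn [v Hv]]] := Hi (maxn m B).
exists n; split; first lia.
exists v; split=> //.
case: (leqP n v) => Hnv; first by [].
have := HB n (ex_intro _ v (conj Hv (ltnW Hnv))); lia.
Qed.

Lemma bdd_infminus : nat_infinite (Dom g) -> bounded_above g -> nat_infinite (Dom_minus g).
Proof. move=> Hi Hb; apply: inf_finplus_infminus => //; exact: bdd_finplus. Qed.

Lemma typ_props t : has_typ g t ->
  match t with
  | Talpha => [/\ nat_infinite (Dom g), bounded_above g, nat_finite (Dom_plus g) & nat_infinite (Dom_minus g)]
  | Tbeta => [/\ nat_infinite (Dom g), nat_finite (Dom_plus g), ~ bounded_above g & nat_infinite (Dom_minus g)]
  | Tgamma => [/\ nat_infinite (Dom_plus g), nat_infinite (Dom_minus g), ~ bounded_above g & nat_infinite (Dom g)]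
  | Tdelta => [/\ nat_infinite (Dom g), nat_finite (Dom_minus g), ~ bounded_above g & nat_infinite (Dom_plus g)]
  | Teps => nat_finite (Dom g)
  end.
Proof.
case: t => /=.
- move=> [H1 H2]; split=> //; [exact: bdd_finplus | exact: bdd_infminus].
- move=> [H1 [H2 H3]]; split=> //; exact: inf_finplus_infminus.
- move=> [H1 H2]; split=> //; [exact: infplus_unb | exact: inf_sub (@plus_dom) H1].
- move=> [H1 H2]; have H3 := inf_finminus_infplus H1 H2; split=> //; exact: infplus_unb.
- by [].
Qed.

Lemma typ_unique t t' : has_typ g t -> has_typ g t' -> t = t'.
Proof.
move=> /typ_props H1 /typ_props H2.
case: t H1; case: t' H2 => //= H2 H1; exfalso;
repeat match goal with H : [/\ _, _, _ & _] |- _ => case: H => ? ? ? ? end;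
solve [ match goal with
  | H1 : nat_infinite ?P, H2 : nat_finite ?P |- _ => exact (inf_fin_false H1 H2)
  | H1 : bounded_above _, H2 : ~ bounded_above _ |- _ => exact (H2 H1) end ].
Qed.
End Typ.

Lemma least_ex (P : nat -> Prop) : (exists n, P n) -> exists m, P m /\ forall k, P k -> m <= k.
Proof.
move=> [n0 Pn0]; apply: NNPP => Hno.
have H : forall n k, k <= n -> ~ P k.
  elim=> [|n IH] k Hk Pk.
    apply: Hno; exists k; split=> // j _; lia.
  case: (leqP k n) => Hkn; first exact: (IH k Hkn Pk).
  apply: Hno; exists k; split=> // j Pj.
  case: (leqP k j) => // Hjk; exfalso; apply: (IH j) => //; lia.
exact: (H n0 n0 (leqnn _) Pn0).
Qed.

Lemma max_ex (S : nat -> Prop) : (exists w, S w) -> (exists B, forall w, S w -> w < B) ->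
  exists v, S v /\ forall w, S w -> w <= v.
Proof.
move=> Hne [B HB]; elim: B HB => [|B IH] HB.
  by case: Hne => w Sw; have := HB w Sw.
case: (classic (S B)) => SB.
  by exists B; split=> // w Sw; have := HB w Sw.
apply: IH => w Sw; have := HB w Sw; rewrite ltnS leq_eqVlt; case/orP=> // /eqP E.
by subst.
Qed.

Lemma In_cat T (x : T) s1 s2 : List.In x (s1 ++ s2) <-> List.In x s1 \/ List.In x s2.
Proof. elim: s1 => [|y s1 IH] /=; [tauto | rewrite IH; tauto]. Qed.

Lemma In_map T1 T2 (f : T1 -> T2) y s : List.In y (map f s) <-> exists x, List.In x s /\ y = f x.
Proof.
elim: s => [|x s IH] /=; first by split=> // [[x []]].
rewrite IH; split.
  case=> [<-|[z [Hz ->]]]; [by exists x; auto | by exists z; auto].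
by case=> z [[<-|Hz] ->]; [left | right; exists z].
Qed.

Lemma In_flatten T (x : T) ss : List.In x (flatten ss) <-> exists s, List.In s ss /\ List.In x s.
Proof.
elim: ss => [|s ss IH] /=; first by split=> // [[s []]].
rewrite In_cat IH; split.
  case=> [H|[s' [H1 H2]]]; [by exists s; auto | by exists s'; auto].
by case=> s' [[<-|H1] H2]; [left | right; exists s'].
Qed.

Lemma In_nseq T (x y : T) n : List.In x (nseq n y) -> x = y.
Proof. by elim: n => //= n IH [->|/IH]. Qed.

Lemma eq_map_In T1 T2 (f g : T1 -> T2) s : (forall x, List.In x s -> f x = g x) -> map f s = map g s.
Proof. elim: s => //= x s IH H; rewrite H ?IH //; auto. Qed.

Lemma map_In_eq T1 T2 (f g : T1 -> T2) s x : map f s = map g s -> List.In x s -> f x = g x.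
Proof. elim: s => //= y s IH [E1 E2] [<-|H]; auto. Qed.

Lemma foldr_max_le T (h : T -> nat) s D : (forall x, List.In x s -> h x <= D) -> foldr maxn 0 (map h s) <= D.
Proof. elim: s => //= x s IH H; rewrite geq_max H ?IH //; auto. Qed.

Lemma foldr_max_ge T (h : T -> nat) s x : List.In x s -> h x <= foldr maxn 0 (map h s).
Proof. elim: s => //= y s IH [<-|H]; rewrite leq_max ?leqnn ?IH ?orbT //. Qed.

Section Trees.
Variables (X Att : Type) (ev : Att -> X -> bool).

Definition pre (f : Att) (b : bool) (p : seq (Att * bool) * nat) := ((f, b) :: p.1, p.2).

Lemma npaths_Node (f : Att) (ch : seq (bool * dnode Att)) : npaths (Node f ch) =
  flatten (map (fun bc => map (pre f bc.1) (npaths bc.2)) ch).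
Proof. by elim: ch => //= [[b c] ch] /= ->. Qed.

Lemma node_ok_Node (P : Att -> Prop) d (f : Att) (ch : seq (bool * dnode Att)) : node_ok P d (Node f ch) <->
  [/\ P f, ch <> [::], (d -> uniq (map fst ch)) & forall bc, List.In bc ch -> node_ok P d bc.2].
Proof.
rewrite /=; have E : (fix aux (ch0 : seq (bool * dnode Att)) : Prop :=
         match ch0 with
         | [::] => True
         | (_, c) :: ch' => node_ok P d c /\ aux ch'
         end) ch <-> forall bc, List.In bc ch -> node_ok P d bc.2.
  elim: ch => [|[b c] ch IH] /=; first by split.
  rewrite IH; split; first by case=> H1 H2 bc [<-|H]; auto.
  by move=> H; split; [apply: (H (b, c)); left | move=> bc Hbc; apply: H; right].
rewrite E; split; [by case=> ? [? [? ?]]; split | by case=> *].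
Qed.

Lemma depth_le (G : dtree Att) D : (forall p, List.In p (paths G) -> size p.1 <= D) -> depth G <= D.
Proof. exact: foldr_max_le. Qed.

Lemma depth_ge (G : dtree Att) p : List.In p (paths G) -> size p.1 <= depth G.
Proof. exact: (foldr_max_ge (fun p : seq (Att * bool) * nat => size p.1)). Qed.

Lemma paths1 (t : dnode Att) : paths [:: t] = npaths t.
Proof. by rewrite /paths /= cats0. Qed.

Lemma sat_nil (x : X) : sat ev x [::].
Proof. by []. Qed.

Lemma sat_cons (x : X) (f : Att) b p : sat ev x ((f, b) :: p) <-> ev f x = b /\ sat ev x p.
Proof.
rewrite /sat /=; split.
  by move=> H; split; [apply: (H (f, b)); left | move=> q Hq; apply: H; right].
by case=> H1 H2 q [<-|Hq]; auto.
Qed.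

Lemma sat_cat (x : X) (p1 p2 : seq (Att * bool)) : sat ev x (p1 ++ p2) <-> sat ev x p1 /\ sat ev x p2.
Proof.
rewrite /sat; split.
  by move=> H; split=> q Hq; apply: H; rewrite In_cat; auto.
by case=> H1 H2 q; rewrite In_cat; case; auto.
Qed.

Lemma det_count (P : Att -> Prop) D (t : dnode Att) : node_ok P true t ->
  (forall p, List.In p (npaths t) -> size p.1 <= D) -> size (npaths t) <= 2 ^ D.
Proof.
elim: D t => [|D IH] [d|f ch]; rewrite ?npaths_Node.
- by [].
- move=> _ H; case E: (flatten _) => [|p ps] //.
  have := H p; rewrite E /=; move/(_ (or_introl erefl)).
  have : List.In p (flatten (map (fun bc => map (pre f bc.1) (npaths bc.2)) ch)) by rewrite E; left.
  by rewrite In_flatten => [[s [/In_map [bc [_ ->]] /In_map [q [_ ->]]]]].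
- by move=> _ _ /=; rewrite expn_gt0.
- move=> /node_ok_Node [_ _ Hu Hch] H.
  have Hsz : size ch <= 2.
    have := Hu erefl => Hu'; rewrite -(size_map fst).
    by apply: (uniq_leq_size (s2 := [:: true; false])) => // b; case: b.
  have Hc : forall bc, List.In bc ch -> size (npaths bc.2) <= 2 ^ D.
    move=> bc Hbc; apply: IH; first exact: Hch.
    move=> p Hp; have : size ((f, bc.1) :: p.1) <= D.+1.
      apply: (H (pre f bc.1 p)); rewrite In_flatten; exists (map (pre f bc.1) (npaths bc.2)); split.
        by rewrite In_map; exists bc.
      by rewrite In_map; exists p.
    by [].
  rewrite size_flatten /shape -map_comp.
  have : sumn (map (size \o (fun bc => map (pre f bc.1) (npaths bc.2))) ch) <= size ch * 2 ^ D.
    elim: ch Hsz Hc {Hu Hch H} => //= bc ch IHc Hsz Hc.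
    rewrite mulSn size_map leq_add //; first by apply: Hc; left.
    by apply: IHc => [|bc' H']; [lia | apply: Hc; right].
  move=> H2; apply: (leq_trans H2); rewrite expnS; exact: leq_mul.
Qed.
End Trees.

Lemma In_Node (Att : Type) (f : Att) ch p : List.In p (npaths (Node f ch)) <->
  exists bc q, [/\ List.In bc ch, List.In q (npaths bc.2) & p = pre f bc.1 q].
Proof.
rewrite npaths_Node In_flatten; split.
  by case=> s [/In_map [bc [Hbc ->]] /In_map [q [Hq ->]]]; exists bc, q.
case=> bc [q [Hbc Hq ->]]; exists (map (pre f bc.1) (npaths bc.2)); split.
  by rewrite In_map; exists bc.
by rewrite In_map; exists q.
Qed.

Lemma In_filter T (p : pred T) x s : List.In x (filter p s) <-> List.In x s /\ p x.
Proof.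
elim: s => [|y s IH] /=; first by split=> // [[]].
case Hy: (p y) => /=; rewrite IH; split.
- by case=> [<-|[? ?]]; auto.
- by case=> [[<-|?] ?]; auto.
- by case=> ? ?; auto.
- by case=> [[E|?] Hx]; [subst; rewrite Hy in Hx | auto].
Qed.

Lemma thr_ex (f : F3) : exists j, proj1_sig f j.+1.
Proof. case: f => g Hg /=; case: Hg => i [_ E]; exists i; rewrite E /l; exact: ltnSn. Qed.

Definition thr (f : F3) : nat := ex_minn (thr_ex f).

Lemma ev3_thr f x : ev3 f x = (thr f < x).
Proof.
rewrite /thr; case: ex_minnP => m Hm Hmin.
case: f Hm Hmin => g [i [Hi E]] /= Hm Hmin; rewrite /ev3 /= E /l.
subst g; rewrite /l in Hm Hmin.
have Hmi : m <= i by apply: Hmin; rewrite ltnS.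
have : i <= m by rewrite -ltnS.
move=> Him; have -> : m = i by apply/eqP; rewrite eqn_leq Hmi Him.
by [].
Qed.

Definition a (i : nat) : F3 := exist _ (l i.+1) (ex_intro _ i.+1 (conj (ltn0Sn i) erefl)).

Lemma ev3_a i x : ev3 (a i) x = (i.+1 < x).
Proof. by []. Qed.

Lemma hmin_ex d (fs : seq F3) nu : (exists G, is_tree_for ev3 d fs nu G) -> exists m, h_min ev3 d fs nu m.
Proof.
move=> [G HG]; have [m [[G' [H1 H2]] Hm]] := @least_ex (fun m => exists G, is_tree_for ev3 d fs nu G /\ depth G = m)
  (ex_intro _ (depth G) (ex_intro _ G (conj HG erefl))).
exists m; split; first by exists G'.
by move=> G'' H''; apply: Hm; exists G''.
Qed.

Lemma hmin_le d (fs : seq F3) nu m G : h_min ev3 d fs nu m -> is_tree_for ev3 d fs nu G -> m <= depth G.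
Proof. by case=> _ H; apply: H. Qed.

Lemma hmin_uniq d (fs : seq F3) nu m m' : h_min ev3 d fs nu m -> h_min ev3 d fs nu m' -> m = m'.
Proof.
move=> [[G [HG <-]] H] [[G' [HG' <-]] H'].
by apply/eqP; rewrite eqn_leq H // H'.
Qed.

Lemma head_in (s : seq nat) : s <> [::] -> head 0 s \in s.
Proof. by case: s => // x s _; rewrite inE eqxx. Qed.

Lemma median (s : seq nat) m : s <> [::] -> size s < 2 ^ m.+1 ->
  exists v, [/\ v \in s, count (fun t => t < v) s < 2 ^ m & count (fun t => v < t) s < 2 ^ m].
Proof.
move=> Hne Hsz.
case: (ltnP (size s) (2 ^ m)) => Hsm.
  exists (head 0 s); split; first exact: head_in.
    exact: leq_ltn_trans (count_size _ _) Hsm.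
  exact: leq_ltn_trans (count_size _ _) Hsm.
have [V HV] : exists V, all (fun t => t <= V) s.
  elim: s {Hne Hsz Hsm} => [|x s [V HV]]; first by exists 0.
  exists (maxn x V) => /=; rewrite leq_maxl /=.
  by apply: sub_all HV => t Ht; rewrite leq_max Ht orbT.
have Hex : exists v, 2 ^ m <= count (fun t => t <= v) s.
  by exists V; move: HV; rewrite all_count => /eqP ->.
case: (ex_minnP Hex) => v Hv Hmin {V HV Hex}.
have Hlt : count (fun t => t < v) s < 2 ^ m.
  case: v Hv Hmin => [|v] Hv Hmin.
    by rewrite (eq_count (a2 := pred0)) ?count_pred0 ?expn_gt0 // => t.
  rewrite (eq_count (a2 := fun t => t <= v)); last by move=> t; rewrite ltnS.
  by case: (ltnP (count (fun t => t <= v) s) (2 ^ m)) => // /Hmin; rewrite ltnn.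
exists v; split=> //.
- apply/negPn/negP => Hvs.
  move: Hv; rewrite (@eq_in_count _ _ (fun t => t < v)); first by rewrite leqNgt Hlt.
  move=> t Ht /=; rewrite leq_eqVlt; case: eqP => // E; subst.
  by rewrite Ht in Hvs.
- have := count_predC (fun t => t <= v) s.
  rewrite (eq_count (a1 := predC _) (a2 := fun t => v < t)); last by move=> t /=; rewrite -ltnNge.
  move: Hsz; rewrite expnS; lia.
Qed.

Lemma in_map_thr (L : seq F3) v : v \in map thr L -> exists g, List.In g L /\ thr g = v.
Proof.
elim: L => //= f L IH; rewrite inE; case/orP.
  by move/eqP=> ->; exists f; auto.
by move/IH=> [g [Hg E]]; exists g; auto.
Qed.

Section Prob.
Variables (fs : seq F3) (nu : seq bool -> seq nat).
Hypothesis Hprob : problem fs nu.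

Lemma nu_head x : head 0 (nu (rowof ev3 fs x)) \in nu (rowof ev3 fs x).
Proof. apply: head_in; case: Hprob => _; apply; by rewrite size_map. Qed.

Definition good (C : nat -> Prop) (t : dnode F3) (D : nat) :=
 [/\ node_ok (fun f => List.In f fs) true t,
     forall p, List.In p (npaths t) -> size p.1 <= D,
     forall x, C x -> exists p, List.In p (npaths t) /\ sat ev3 x p.1 &
     forall p x, List.In p (npaths t) -> C x -> sat ev3 x p.1 -> p.2 \in nu (rowof ev3 fs x)].

Lemma good_mono C t D D' : D <= D' -> good C t D -> good C t D'.
Proof. by move=> HD [H1 H2 H3 H4]; split=> // p Hp'; apply: leq_trans (H2 p Hp') HD. Qed.

Lemma good_base C : (forall x y, C x -> C y -> rowof ev3 fs x = rowof ev3 fs y) ->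
  exists t, good C t 0.
Proof.
move=> Hc; case: (classic (exists x0, C x0)) => [[x0 Cx0]|Hno].
  exists (Leaf F3 (head 0 (nu (rowof ev3 fs x0)))); split=> //=.
  - by move=> p [<-|].
  - by move=> x Cx; exists ([::], head 0 (nu (rowof ev3 fs x0))); split; [left|].
  - by move=> p x [<-|] // Cx _ /=; rewrite (Hc x x0) //; exact: nu_head.
exists (Leaf F3 0); split=> //=.
- by move=> p [<-|].
- by move=> x Cx; case: Hno; exists x.
- by move=> p x _ Cx; case: Hno; exists x.
Qed.

Lemma BS m : forall C L, (forall f, List.In f L -> List.In f fs) -> size L < 2 ^ m ->
  (forall x y, C x -> C y -> (forall f, List.In f L -> ev3 f x = ev3 f y) ->
     rowof ev3 fs x = rowof ev3 fs y) ->
  exists t, good C t m.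
Proof.
elim: m => [|m IH] C L HL Hsz Hdet.
  case: L HL Hsz Hdet => // _ _ Hdet.
  by apply: good_base => x y Cx Cy; apply: Hdet.
case: L HL Hsz Hdet => [|f0 L0] HL Hsz Hdet.
  have [t Ht] := IH C [::] HL (expn_gt0 _ _) Hdet.
  by exists t; apply: good_mono Ht.
set L := f0 :: L0 in HL Hsz Hdet *.
have [v [Hv H1 H2]] : exists v, [/\ v \in map thr L, count (fun t => t < v) (map thr L) < 2 ^ m & count (fun t => v < t) (map thr L) < 2 ^ m] by apply: median; rewrite ?size_map.
have [g [Hg Eg]] := in_map_thr Hv.
rewrite count_map in H1; rewrite count_map in H2.
set C0 := fun x => C x /\ ev3 g x = false.
set C1 := fun x => C x /\ ev3 g x = true.
have [t0 [Ok0 D0 Cov0 Cor0]] : exists t, good C0 t m.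
  apply: (IH C0 (filter (fun f => thr f < thr g) L)).
  - by move=> f /In_filter [Hf _]; apply: HL.
  - by rewrite size_filter Eg.
  move=> x y [Cx gx] [Cy gy] Hxy; apply: Hdet => // f Hf.
  case: (ltnP (thr f) (thr g)) => Hfg.
    by apply: Hxy; rewrite In_filter; split.
  move: gx gy; rewrite !ev3_thr => gx gy.
  by case: (ltnP (thr f) x); case: (ltnP (thr f) y) => //; lia.
have [t1 [Ok1 D1 Cov1 Cor1]] : exists t, good C1 t m.
  apply: (IH C1 (filter (fun f => thr g < thr f) L)).
  - by move=> f /In_filter [Hf _]; apply: HL.
  - by rewrite size_filter Eg.
  move=> x y [Cx gx] [Cy gy] Hxy; apply: Hdet => // f Hf.
  case: (ltnP (thr g) (thr f)) => Hfg.
    by apply: Hxy; rewrite In_filter; split.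
  move: gx gy; rewrite !ev3_thr => gx gy.
  by case: (ltnP (thr f) x); case: (ltnP (thr f) y) => //; lia.
exists (Node g [:: (false, t0); (true, t1)]); split.
- rewrite node_ok_Node; split=> //; first exact: HL.
  by move=> bc [<-|[<-|]].
- move=> p /In_Node [bc [q [Hbc Hq ->]]]; case: Hbc => [Eb|[Eb|]] //; subst bc => /=.
  + by rewrite ltnS; apply: D0.
  + by rewrite ltnS; apply: D1.
- move=> x Cx; case E: (ev3 g x).
    have [q [Hq Sq]] := Cov1 x (conj Cx E).
    exists (pre g true q); split.
      by rewrite In_Node; exists (true, t1), q; split=> //; right; left.
    by rewrite /= sat_cons.
  have [q [Hq Sq]] := Cov0 x (conj Cx E).
  exists (pre g false q); split.
    by rewrite In_Node; exists (false, t0), q; split=> //; left.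
  by rewrite /= sat_cons.
- move=> p x /In_Node [bc [q [Hbc Hq ->]]] Cx /= /sat_cons [E Sq]; case: Hbc => [Eb|[Eb|]] //; subst bc.
  + by apply: Cor0.
  + by apply: Cor1.
Qed.

Lemma good_tree t D : good (fun _ => True) t D -> is_tree_for ev3 true fs nu [:: t] /\ depth [:: t] <= D.
Proof.
move=> [Ok Dp Cov Cor]; split; last by apply: depth_le => p; rewrite paths1; apply: Dp.
split=> //; split=> //; split; first by move=> t' [<-|].
rewrite paths1; split.
  move=> delta [x ->]; have [p [Hp Sp]] := Cov x I.
  by exists p; split=> //; exists x.
by move=> xi delta Hxi [x [-> Sx]]; apply: Cor.
Qed.

Lemma hd_exists : exists w, h_min ev3 true fs nu w.
Proof.
apply: hmin_ex.
have [t Ht] := @BS (size fs) (fun _ => True) fs (fun f H => H) (ltn_expl _ (leqnn 2))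
  (fun x y _ _ H => eq_map_In H).
by exists [:: t]; case: (good_tree Ht).
Qed.

Lemma hd_log m w : size fs < 2 ^ m -> h_min ev3 true fs nu w -> w <= m.
Proof.
move=> Hs Hw.
have [t Ht] := @BS m (fun _ => True) fs (fun f H => H) Hs (fun x y _ _ H => eq_map_In H).
case: (good_tree Ht) => HT HD; exact: leq_trans (hmin_le Hw HT) HD.
Qed.

Lemma hd_size w : h_min ev3 true fs nu w -> w <= size fs.
Proof. by apply: hd_log; apply: ltn_expl. Qed.

End Prob.

Lemma argmax (s : seq F3) (P : pred F3) (h : F3 -> nat) : (exists f, List.In f s /\ P f) ->
  exists g, [/\ List.In g s, P g & forall f, List.In f s -> P f -> h f <= h g].
Proof.
elim: s => [|x s IH] [f [Hf Pf]] //=.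
case: (classic (exists f, List.In f s /\ P f)) => [Hex|Hno].
  have [g [Hg Pg Hm]] := IH Hex.
  case: (boolP (P x && (h g < h x))) => [/andP [Px Hlt]|Hn].
    exists x; split; auto => f' [<-|Hf'] Pf'; first by [].
    by apply: ltnW; apply: leq_ltn_trans (Hm _ Hf' Pf') Hlt.
  exists g; split; auto => f' [<-|Hf'] Pf'; last exact: Hm.
  by move: Hn; rewrite Pf' /= -leqNgt.
case: Hf => [Ex|Hf]; last by case: Hno; exists f.
subst f; exists x; split; auto => f' [<-|Hf'] Pf' //.
by case: Hno; exists f'.
Qed.

Lemma argmin (s : seq F3) (P : pred F3) (h : F3 -> nat) : (exists f, List.In f s /\ P f) ->
  exists g, [/\ List.In g s, P g & forall f, List.In f s -> P f -> h g <= h f].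
Proof.
elim: s => [|x s IH] [f [Hf Pf]] //=.
case: (classic (exists f, List.In f s /\ P f)) => [Hex|Hno].
  have [g [Hg Pg Hm]] := IH Hex.
  case: (boolP (P x && (h x < h g))) => [/andP [Px Hlt]|Hn].
    exists x; split; auto => f' [<-|Hf'] Pf'; first by [].
    by apply: ltnW; apply: leq_trans Hlt (Hm _ Hf' Pf').
  exists g; split; auto => f' [<-|Hf'] Pf'; last exact: Hm.
  by move: Hn; rewrite Pf' /= -leqNgt.
case: Hf => [Ex|Hf]; last by case: Hno; exists f.
subst f; exists x; split; auto => f' [<-|Hf'] Pf' //.
by case: Hno; exists f'.
Qed.

Definition chain (p : seq (F3 * bool)) (d : nat) : dnode F3 :=
  foldr (fun fb t => Node fb.1 [:: (fb.2, t)]) (Leaf F3 d) p.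

Lemma npaths_chain p d : npaths (chain p d) = [:: (p, d)].
Proof. by elim: p => //= [[f b] p] /= ->. Qed.

Lemma node_ok_chain (P : F3 -> Prop) p d : (forall fb, List.In fb p -> P fb.1) -> node_ok P false (chain p d).
Proof.
elim: p => //= [[f b] p] IH H /=; split; first by apply: (H (f, b)); left.
split; first by []. split; first by []. split; last by []. apply: IH => fb Hfb; apply: H; right; exact: Hfb.
Qed.

Lemma In_iota x n : x < n -> List.In x (iota 0 n).
Proof.
move=> H; have : x \in iota 0 n by rewrite mem_iota.
elim: (iota 0 n) => //= y s IH; rewrite inE; case/orP; [move/eqP=> ->; auto | auto].
Qed.

Section Prob2.
Variables (fs : seq F3) (nu : seq bool -> seq nat).
Hypothesis Hprob : problem fs nu.

Lemma rowof_eq x y : rowof ev3 fs y = rowof ev3 fs x <-> forall f, List.In f fs -> ev3 f y = ev3 f x.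
Proof. split; [move=> E f; exact: map_In_eq E | exact: eq_map_In]. Qed.

Lemma Lo x : exists plo : seq (F3 * bool), [/\ size plo <= 1, (forall fb, List.In fb plo -> List.In fb.1 fs) &
  forall y, sat ev3 y plo <-> (forall f, List.In f fs -> thr f < x -> thr f < y)].
Proof.
case: (classic (exists f, List.In f fs /\ thr f < x)) => [Hex|Hno].
  have [g [Hg Pg Hm]] := argmax thr Hex.
  exists [:: (g, true)]; split; [by [] | by move=> fb [<-|] |].
  move=> y; rewrite sat_cons ev3_thr; split.
    by case=> Hy _ f Hf Hfx; apply: leq_ltn_trans (Hm f Hf Hfx) _; rewrite Hy.
  by move=> H; split=> //; apply: H.
exists [::]; split; [by [] | by [] | move=> y; split; [move=> _ f Hf Hfx; case: Hno; by exists f | by move=> _ q []]].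
Qed.

Lemma Hi x : exists phi : seq (F3 * bool), [/\ size phi <= 1, (forall fb, List.In fb phi -> List.In fb.1 fs) &
  forall y, sat ev3 y phi <-> (forall f, List.In f fs -> x <= thr f -> y <= thr f)].
Proof.
case: (classic (exists f, List.In f fs /\ x <= thr f)) => [Hex|Hno].
  have [g [Hg Pg Hm]] := argmin thr Hex.
  exists [:: (g, false)]; split; [by [] | by move=> fb [<-|] |].
  move=> y; rewrite sat_cons ev3_thr; split.
    case=> Hy _ f Hf Hfx; apply: leq_trans _ (Hm f Hf Hfx).
    by move/negbT: Hy; rewrite -leqNgt.
  by move=> H; split=> //; apply/negbTE; rewrite -leqNgt; apply: H.
exists [::]; split; [by [] | by [] | move=> y; split; [move=> _ f Hf Hfx; case: Hno; by exists f | by move=> _ q []]].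
Qed.

Definition Qn x (t : dnode F3) := node_ok (fun f => List.In f fs) false t /\
  exists p d, [/\ npaths t = [:: (p, d)], size p <= 2,
     forall y, sat ev3 y p <-> rowof ev3 fs y = rowof ev3 fs x & d \in nu (rowof ev3 fs x)].

Lemma Qn_ex x : exists t, Qn x t.
Proof.
have [plo [S1 A1 E1]] := Lo x; have [phi [S2 A2 E2]] := Hi x.
exists (chain (plo ++ phi) (head 0 (nu (rowof ev3 fs x)))); split.
  apply: node_ok_chain => fb; rewrite In_cat; case; auto.
exists (plo ++ phi), (head 0 (nu (rowof ev3 fs x))); split.
- exact: npaths_chain.
- by rewrite size_cat; lia.
- move=> y; rewrite sat_cat E1 E2 rowof_eq; split.
    case=> H1 H2 f Hf; rewrite !ev3_thr.
    case: (ltnP (thr f) x) => Hfx; first by rewrite (H1 f Hf Hfx).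
    by apply/negbTE; rewrite -leqNgt; apply: H2.
  move=> H; split=> f Hf Hfx; have := H f Hf; rewrite !ev3_thr.
    by rewrite Hfx.
  by rewrite [thr f < x]ltnNge Hfx /= => /negbT; rewrite -leqNgt.
- exact: nu_head.
Qed.

Lemma ha_tree : exists G, is_tree_for ev3 false fs nu G /\ depth G <= 2.
Proof.
have [M HM] : exists M, forall f, List.In f fs -> thr f <= M.
  elim: fs => [|f s [M HM]]; first by exists 0.
  exists (maxn (thr f) M) => f' [<-|Hf']; first exact: leq_maxl.
  by apply: leq_trans (HM _ Hf') (leq_maxr _ _).
pose tf x := proj1_sig (constructive_indefinite_description _ (Qn_ex x)).
have Htf : forall x, Qn x (tf x) := fun x => proj2_sig (constructive_indefinite_description _ (Qn_ex x)).
have Hrow : forall x, rowof ev3 fs x = rowof ev3 fs (minn x M.+1).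
  move=> x; apply/rowof_eq => f Hf; rewrite !ev3_thr; have := HM f Hf.
  case: (leqP x M.+1) => Hx // Hfm; lia.
have Hcor : forall xi, List.In xi (paths (map tf (iota 0 M.+2))) ->
   exists x, [/\ size xi.1 <= 2, forall y, sat ev3 y xi.1 <-> rowof ev3 fs y = rowof ev3 fs x &
       xi.2 \in nu (rowof ev3 fs x)].
  move=> xi; rewrite /paths In_flatten => [[s [/In_map [t [/In_map [x [_ ->]] ->]] Hs]]].
  have [_ [p [d [E1 E2 E3 E4]]]] := Htf x.
  by move: Hs; rewrite E1 => [[<-|]] //; exists x.
exists (map tf (iota 0 M.+2)); split; last first.
  by apply: depth_le => p /Hcor [x [H _ _]].
split=> //; split=> //; split.
  by move=> t /In_map [x [_ ->]]; case: (Htf x).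
split.
  move=> delta [x ->]; set x' := minn x M.+1.
  have [_ [p [d [E1 E2 E3 E4]]]] := Htf x'.
  exists (p, d); split.
    rewrite /paths In_flatten; exists (npaths (tf x')); split.
      rewrite In_map; exists (tf x'); split=> //; rewrite In_map; exists x'; split=> //.
      by apply: In_iota; rewrite /x' ltnS geq_minr.
    by rewrite E1; left.
  by exists x; split=> //; rewrite /= E3 Hrow.
move=> xi delta /Hcor [x [_ E3 E4]] [y [-> Sy]].
by move: Sy; rewrite E3 => ->.
Qed.

Lemma ha_exists : exists w, h_min ev3 false fs nu w.
Proof. by apply: hmin_ex; case: ha_tree => G [HG _]; exists G. Qed.

Lemma ha_le2 w : h_min ev3 false fs nu w -> w <= 2.
Proof. by move=> Hw; case: ha_tree => G [HG HD]; apply: leq_trans (hmin_le Hw HG) HD. Qed.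
End Prob2.

Definition nu0 : seq bool -> seq nat := fun _ => [:: 0].

Lemma prob_const N : 0 < N -> problem (nseq N (a 0)) nu0.
Proof. by case: N. Qed.

Lemma hmin_const d (fs : seq F3) : h_min ev3 d fs nu0 0.
Proof.
split=> //; exists [:: Leaf F3 0]; split=> //.
split=> //; split=> //; split; first by move=> t [<-|].
rewrite paths1; split.
  move=> delta [x ->]; exists ([::], 0); split; first by left.
  by exists x; split.
by move=> xi delta [<-|].
Qed.

Definition fsK (k : nat) : seq F3 := map a (iota 0 k).
Definition nuK : seq bool -> seq nat := fun delta => [:: count id delta].

Lemma prob_K k : 0 < k -> problem (fsK k) nuK.
Proof. by case: k. Qed.

Lemma size_fsK k : size (fsK k) = k.
Proof. by rewrite size_map size_iota. Qed.

Lemma countK k j : j <= k -> count id (rowof ev3 (fsK k) j.+1) = j.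
Proof.
move=> Hjk; rewrite /rowof /fsK -map_comp count_map.
rewrite (eq_count (a2 := fun i => i < j)); last by move=> i /=; rewrite /l ltnS.
rewrite -(subnKC Hjk) iotaD count_cat add0n.
rewrite (@eq_in_count _ _ predT (iota 0 j)); last by move=> i; rewrite mem_iota /= add0n => ->.
rewrite (@eq_in_count _ _ pred0 (iota j (k - j))); last by move=> i; rewrite mem_iota => /andP [Hi _] /=; apply/negbTE; rewrite -leqNgt.
by rewrite count_predT count_pred0 size_iota addn0.
Qed.

Lemma In_snd T (xi : T * nat) s : List.In xi s -> xi.2 \in map snd s.
Proof. elim: s => //= y s IH [->|H]; rewrite inE; [by rewrite eqxx | by rewrite IH ?orbT]. Qed.

Lemma lowK k G : is_tree_for ev3 true (fsK k) nuK G -> k < 2 ^ depth G.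
Proof.
case=> _ [H1 [H2 [Hcov Hcor]]].
have := H1 erefl; case: G H2 Hcov Hcor {H1} => [|t [|t' G]] // H2 Hcov Hcor _.
have Ok : node_ok (fun f => List.In f (fsK k)) true t by apply: H2; left.
have Hc : size (npaths t) <= 2 ^ depth [:: t].
  by apply: (det_count Ok) => p Hp; apply: depth_ge; rewrite paths1.
apply: leq_trans Hc; rewrite -(size_map snd) -(size_iota 0 k.+1).
apply: uniq_leq_size; first exact: iota_uniq.
move=> j; rewrite mem_iota add0n ltnS => Hj.
have [xi [Hxi Hin]] := Hcov (rowof ev3 (fsK k) j.+1) (ex_intro _ j.+1 erefl).
have := Hcor xi _ Hxi Hin; rewrite /nuK countK // inE => /eqP Exi.
by rewrite -Exi; apply: In_snd; rewrite -paths1.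
Qed.

Lemma hK_low k w : h_min ev3 true (fsK k) nuK w -> k < 2 ^ w.
Proof. by case=> [[G [HG <-]] _]; apply: lowK. Qed.

Lemma pow_pos B : 0 < 2 ^ B. Proof. by rewrite expn_gt0. Qed.

Lemma Dom_of b c n : (exists w, Sset ev3 b c n w) -> (exists B, forall w, Sset ev3 b c n w -> w < B) ->
  Dom (Ufun ev3 b c) n.
Proof.
move=> Hne Hb; have [v [Sv Hv]] := max_ex Hne Hb.
by exists v; split=> //; split=> //; split.
Qed.

Lemma exp_big n : 3 <= n -> n < 2 ^ n.-1.
Proof.
elim: n => // n IH; rewrite leq_eqVlt; case/orP=> [/eqP <- //|Hn].
have := IH Hn; case: n Hn {IH} => //= n Hn H; rewrite expnS; lia.
Qed.

Lemma cell_ii : has_typ (Ufun ev3 HI HI) Tgamma.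
Proof.
have H : forall n, 0 < n -> Ufun ev3 HI HI n n.
  move=> n Hn.
  have Sn : Sset ev3 HI HI n n.
    exists (nseq n (a 0)), nu0; split; first exact: prob_const.
    by rewrite /= size_nseq; split=> //; exists n.
  split; first by exists n.
  split; last split=> //.
    by exists n.+1 => w [fs [nu [_ [/= -> [m [/= -> Hm]]]]]].
  by move=> w [fs [nu [_ [/= -> [m [/= -> Hm]]]]]].
by split=> m; exists m.+1; split=> //; exists m.+1; split=> //; apply: H.
Qed.

Lemma cell_i_eps c : c <> HI -> has_typ (Ufun ev3 HI c) Teps.
Proof.
move=> Hc; exists 0 => n [v [_ [[B HB] _]]].
have : Sset ev3 HI c n B.+1.
  exists (nseq B.+1 (a 0)), nu0; split; first exact: prob_const.
  split; first by rewrite /= size_nseq.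
  exists 0; split=> //.
  by case: c Hc {HB} => //= _; apply: hmin_const.
by move/HB; lia.
Qed.

Lemma Sset_di n w : Sset ev3 HD HI n w -> w <= n.
Proof. by case=> fs [nu [Hp [/= Hw [m [/= -> Hm]]]]]; apply: leq_trans (hd_size Hp Hw) Hm. Qed.

Lemma Dom_di n : 0 < n -> Dom (Ufun ev3 HD HI) n.
Proof.
move=> Hn; apply: Dom_of.
  exists 0, (nseq 1 (a 0)), nu0; split; first exact: prob_const.
  by split; [apply: hmin_const | exists 1].
by exists n.+1 => w /Sset_di.
Qed.

Lemma Sset_K b c n k w : 0 < k -> h_min ev3 true (fsK k) nuK w ->
  (exists m, hval ev3 c (fsK k) nuK m /\ m <= n) -> b = HD -> Sset ev3 b c n w.
Proof. move=> Hk Hw Hc ->; exists (fsK k), nuK; split; [exact: prob_K | by split]. Qed.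

Lemma cell_di : has_typ (Ufun ev3 HD HI) Tbeta.
Proof.
split; first by move=> m; exists m.+1; split=> //; apply: Dom_di.
split.
  exists 3 => n [v [[_ [_ [Sv _]]] Hnv]]; rewrite ltnNge; apply/negP => H3.
  case: Sv => fs [nu [Hp [/= Hw [m [/= Em Hm]]]]].
  have := @hd_log fs nu Hp n.-1 v; rewrite -Em.
  move/(_ (leq_ltn_trans Hm (exp_big H3)) Hw) => Hv'; lia.
move=> [B HB].
have [w Hw] := @hd_exists (fsK (2 ^ B)) nuK (prob_K (pow_pos _)).
have [v Hv] := Dom_di (pow_pos B).
have Sw : Sset ev3 HD HI (2 ^ B) w.
  apply: Sset_K Hw _ erefl; first exact: pow_pos.
  by exists (2 ^ B); rewrite /= size_fsK.
case: (Hv) => _ [_ [_ Hmax]].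
have := HB _ _ Hv; have := Hmax _ Sw; have := hK_low Hw; rewrite ltn_exp2l //; lia.
Qed.

Lemma Ufun_dd n : 0 < n -> Ufun ev3 HD HD n n.
Proof.
move=> Hn.
have Hk : 0 < (2 ^ n).-1 by rewrite -ltnS prednK ?expn_gt0 // -{1}(expn0 2) ltn_exp2l.
have [w Hw] := @hd_exists (fsK (2 ^ n).-1) nuK (prob_K Hk).
have Ew : w = n.
  apply/eqP; rewrite eqn_leq; apply/andP; split.
    apply: (@hd_log _ _ (prob_K Hk) n w _ Hw); rewrite size_fsK prednK ?pow_pos //.
  by have := hK_low Hw; rewrite prednK ?pow_pos // leq_exp2l.
have Sn : Sset ev3 HD HD n n.
  subst w; apply: (Sset_K Hk Hw) => //; exists n; split; [exact: Hw | by []].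
have Hle : forall w', Sset ev3 HD HD n w' -> w' <= n.
  by move=> w' [fs [nu [_ [/= Hw' [m [/= Hm Hmn]]]]]]; rewrite (hmin_uniq Hw' Hm).
split; first by exists n.
split; first by exists n.+1 => w' /Hle.
by split.
Qed.

Lemma cell_dd : has_typ (Ufun ev3 HD HD) Tgamma.
Proof. by split=> m; exists m.+1; split=> //; exists m.+1; split=> //; apply: Ufun_dd. Qed.

Lemma cell_da : has_typ (Ufun ev3 HD HA) Teps.
Proof.
exists 2 => n [v [_ [[B HB] _]]]; rewrite ltnNge; apply/negP => H2.
have [w Hw] := @hd_exists (fsK (2 ^ B)) nuK (prob_K (pow_pos _)).
have [m Hm] := @ha_exists (fsK (2 ^ B)) nuK (prob_K (pow_pos _)).
have Sw : Sset ev3 HD HA n w.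
  apply: Sset_K Hw _ erefl; first exact: pow_pos.
  by exists m; split=> //; apply: leq_trans (ha_le2 (prob_K (pow_pos _)) Hm) H2.
have := HB _ Sw; have := hK_low Hw; rewrite ltn_exp2l //; lia.
Qed.

Lemma cell_a c : has_typ (Ufun ev3 HA c) Talpha.
Proof.
have Hle : forall n w, Sset ev3 HA c n w -> w <= 2.
  move=> n w [fs [nu [Hp [Hw _]]]]. exact: (ha_le2 Hp Hw).
split; last by exists 2 => n v [_ [_ [Sv _]]]; apply: Hle Sv.
move=> m; exists m.+1; split=> //; apply: Dom_of.
  exists 0, (nseq 1 (a 0)), nu0; split; first exact: prob_const.
  split; first exact: hmin_const.
  exists (if c is HI then 1 else 0); split=> //; case: c {Hle} => //=; exact: hmin_const.
by exists 3 => w /Hle.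
Qed.

Lemma cells b c : has_typ (Ufun ev3 b c) (t3 b c).
Proof.
case: b; case: c => /=.
- exact: cell_ii.
- exact: cell_i_eps.
- exact: cell_i_eps.
- exact: cell_di.
- exact: cell_dd.
- exact: cell_da.
- exact: cell_a.
- exact: cell_a.
- exact: cell_a.
Qed.

Theorem lemma11 :
  forall (b c : hkind) (t : typ),
    has_typ (Ufun ev3 b c) t <-> t = t3 b c.
Proof.
move=> b c t; split; first by move=> H; apply: typ_unique H (cells b c).
by move=> ->; apply: cells.
Qed.
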